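(* Let $(\mathcal{L},[\cdot,\cdot,\cdot]_{\mathcal{L}})$ be a (right) $3$-Leibniz algebra over a field $\mathbb{K}$ and $\overline{\mathcal{L}}=\mathbb{K}\oplus\mathcal{L}$. Let $R_1$ be the linear map on $(\mathbb{K}\oplus(\mathcal{L}\otimes\mathcal{L}))^{\otimes2}$ given by $R_1((a,x_1\otimes x_2)\otimes(b,y_1\otimes y_2))=(b,y_1\otimes y_2)\otimes(a,x_1\otimes x_2)+(1,0)\otimes(0,[x_1,y_1,y_2]_{\mathcal{L}}\otimes x_2+x_1\otimes[x_2,y_1,y_2]_{\mathcal{L}})$, and $R_2$ the linear map on $(\overline{\mathcal{L}}\otimes\overline{\mathcal{L}})^{\otimes2}$ given by $R_2((a_1,x_1)\otimes(a_2,x_2)\otimes(b_1,y_1)\otimes(b_2,y_2))=(b_1,y_1)\otimes(b_2,y_2)\otimes(a_1,x_1)\otimes(a_2,x_2)+(1,0)\otimes(1,0)\otimes\big((0,[x_1,y_1,y_2]_{\mathcal{L}})\otimes(a_2,x_2)+(a_1,x_1)\otimes(0,[x_2,y_1,y_2]_{\mathcal{L}})\big)$. Define the injective linear map $\mathfrak{s}:\mathbb{K}\oplus(\mathcal{L}\otimes\mathcal{L})\to\overline{\mathcal{L}}\otimes\overline{\mathcal{L}}$ by $\mathfrak{s}(a,x\otimes y)=a(1,0)\otimes(1,0)+(0,x)\otimes(0,y)$. Then $(\mathfrak{s}\otimes\mathfrak{s})\circ R_1=R_2\circ(\mathfrak{s}\otimes\mathfrak{s})$.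
   Context: A (right) $3$-Leibniz algebra is a vector space $\mathcal{L}$ with a trilinear map $[\cdot,\cdot,\cdot]_{\mathcal{L}}$ such that $[[x_1,x_2,x_3]_{\mathcal{L}},y_1,y_2]_{\mathcal{L}}=[[x_1,y_1,y_2]_{\mathcal{L}},x_2,x_3]_{\mathcal{L}}+[x_1,[x_2,y_1,y_2]_{\mathcal{L}},x_3]_{\mathcal{L}}+[x_1,x_2,[x_3,y_1,y_2]_{\mathcal{L}}]_{\mathcal{L}}$. Both $R_1$ and $R_2$ are solutions of the Yang-Baxter equation; the claim says $\mathfrak{s}$ is a homomorphism between them. *)

(* Defs.v *)
From mathcomp Require Import all_boot all_algebra.
Set Implicit Arguments. Unset Strict Implicit. Unset Printing Implicit Defensive.
Import GRing.Theory.
Local Open Scope ring_scope.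

(* We represent elements of a tensor
   product V1 (x) ... (x) Vk by finite formal sums of pure tensors
   (lists of k-tuples); two such representatives denote the same element of the
   tensor product iff every k-linear map (into any K-vector space) takes the same
   value on them (universal property of the tensor product). *)

Section ThreeLeibniz.
Variable (K : fieldType) (L : lmodType K).

Definition trilinear (br : L -> L -> L -> L) :=
  [/\ forall (c : K) u v y z, br (c *: u + v) y z = c *: br u y z + br v y z,
      forall (c : K) x u v z, br x (c *: u + v) z = c *: br x u z + br x v z &
      forall (c : K) x y u v, br x y (c *: u + v) = c *: br x y u + br x y v].

Definition right_3Leibniz (br : L -> L -> L -> L) :=
  forall x1 x2 x3 y1 y2,
    br (br x1 x2 x3) y1 y2 =
    br (br x1 y1 y2) x2 x3 + br x1 (br x2 y1 y2) x3 + br x1 x2 (br x3 y1 y2).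

Definition is_3Leibniz (br : L -> L -> L -> L) := trilinear br /\ right_3Leibniz br.

Definition Lbar : lmodType K := (K^o * L)%type.
Definition one0 : Lbar := (1 : K^o, 0 : L).
Definition inL (x : L) : Lbar := (0 : K^o, x).

(* formal sums representing elements of L (x) L *)
Definition T2 := seq (L * L).
Definition D := (K * T2)%type.
(* formal sums representing elements of (K (+) (L (x) L))^{(x)2} *)
Definition DD := seq (D * D).
(* formal sums representing elements of (Lbar (x) Lbar)^{(x)2} = Lbar^{(x)4} *)
Definition LB4 := seq (Lbar * Lbar * Lbar * Lbar).

Definition multilinear4 (W : lmodType K) (phi : Lbar -> Lbar -> Lbar -> Lbar -> W) :=
  [/\ forall (c : K) u v x2 x3 x4,
        phi (c *: u + v) x2 x3 x4 = c *: phi u x2 x3 x4 + phi v x2 x3 x4,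
      forall (c : K) x1 u v x3 x4,
        phi x1 (c *: u + v) x3 x4 = c *: phi x1 u x3 x4 + phi x1 v x3 x4,
      forall (c : K) x1 x2 u v x4,
        phi x1 x2 (c *: u + v) x4 = c *: phi x1 x2 u x4 + phi x1 x2 v x4 &
      forall (c : K) x1 x2 x3 u v,
        phi x1 x2 x3 (c *: u + v) = c *: phi x1 x2 x3 u + phi x1 x2 x3 v].

Definition eval4 (W : lmodType K) (phi : Lbar -> Lbar -> Lbar -> Lbar -> W)
  (t : LB4) : W := \sum_(w <- t) phi w.1.1.1 w.1.1.2 w.1.2 w.2.

Definition tensor4_eq (t1 t2 : LB4) : Prop :=
  forall (W : lmodType K) (phi : Lbar -> Lbar -> Lbar -> Lbar -> W),
    multilinear4 phi -> eval4 phi t1 = eval4 phi t2.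

Variable br : L -> L -> L -> L.

Definition s_map (d : D) : seq (Lbar * Lbar) :=
  (d.1 *: one0, one0) :: [seq (inL p.1, inL p.2) | p <- d.2].

Definition ss (X : DD) : LB4 :=
  flatten [seq [seq (u.1, u.2, v.1, v.2) | u <- s_map p.1, v <- s_map p.2] | p <- X].

Definition R1_pure (d d' : D) : DD :=
  let extra : T2 :=
    flatten [seq [:: (br x.1 y.1 y.2, x.2); (x.1, br x.2 y.1 y.2)]
            | x <- d.2, y <- d'.2] in
  [:: (d', d); ((1, [::]), (0, extra))].

Definition R1 (X : DD) : DD := flatten [seq R1_pure p.1 p.2 | p <- X].

Definition R2_pure (w : Lbar * Lbar * Lbar * Lbar) : LB4 :=
  let p1 := w.1.1.1 in let p2 := w.1.1.2 in let q1 := w.1.2 in let q2 := w.2 in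
  [:: (q1, q2, p1, p2);
      (one0, one0, inL (br p1.2 q1.2 q2.2), p2);
      (one0, one0, p1, inL (br p2.2 q1.2 q2.2))].

Definition R2 (t : LB4) : LB4 := flatten [seq R2_pure w | w <- t].

End ThreeLeibniz.

(* Main.v *)
Require Import Defs.
From mathcomp Require Import all_boot all_algebra.
Set Implicit Arguments. Unset Strict Implicit. Unset Printing Implicit Defensive.
Import GRing.Theory.
Local Open Scope ring_scope.

Lemma dbl0 (V : zmodType) (a : V) : a = a + a -> a = 0.
Proof. by move=> E; have := congr1 (fun w => w - a) E; rewrite addrK subrr. Qed.

Section Aux.
Variable (K : fieldType) (L : lmodType K) (W : lmodType K).
Variable phi : Lbar L -> Lbar L -> Lbar L -> Lbar L -> W.
Hypothesis hphi : multilinear4 phi.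

Lemma phi0_1 x2 x3 x4 : phi 0 x2 x3 x4 = 0.
Proof.
case: hphi => h _ _ _; have := h 1 0 0 x2 x3 x4.
by rewrite !scale1r !addr0 => /dbl0.
Qed.
Lemma phi0_3 x1 x2 x4 : phi x1 x2 0 x4 = 0.
Proof.
case: hphi => _ _ h _; have := h 1 x1 x2 0 0 x4.
by rewrite !scale1r !addr0 => /dbl0.
Qed.
Lemma phi0_4 x1 x2 x3 : phi x1 x2 x3 0 = 0.
Proof.
case: hphi => _ _ _ h; have := h 1 x1 x2 x3 0 0.
by rewrite !scale1r !addr0 => /dbl0.
Qed.

Lemma eval4_cat (s t : LB4 L) : eval4 phi (s ++ t) = eval4 phi s + eval4 phi t.
Proof. by rewrite /eval4 big_cat. Qed.

End Aux.

Lemma ss_cat (K : fieldType) (L : lmodType K) (s t : DD L) : ss (s ++ t) = ss s ++ ss t.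
Proof. by rewrite /ss map_cat flatten_cat. Qed.
Lemma R2_cat (K : fieldType) (L : lmodType K) br (s t : LB4 L) : R2 br (s ++ t) = R2 br s ++ R2 br t.
Proof. by rewrite /R2 map_cat flatten_cat. Qed.

Section Aux2.
Variable (K : fieldType) (L : lmodType K) (W : lmodType K).

Lemma sum_ss (G : Lbar L * Lbar L * Lbar L * Lbar L -> W) (Y : DD L) :
  \sum_(w <- ss Y) G w =
  \sum_(p <- Y) \sum_(u <- s_map p.1) \sum_(v <- s_map p.2) G (u.1, u.2, v.1, v.2).
Proof.
rewrite /ss big_flatten big_map; apply: eq_bigr => p _.
by rewrite big_allpairs_dep.
Qed.

Lemma sum_smap (F : Lbar L * Lbar L -> W) (d : D L) :
  \sum_(u <- s_map d) F u = F (d.1 *: one0 L, one0 L) + \sum_(p <- d.2) F (inL p.1, inL p.2).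
Proof. by rewrite /s_map big_cons big_map. Qed.

Lemma sum_R2 br (G : Lbar L * Lbar L * Lbar L * Lbar L -> W) (t : LB4 L) :
  \sum_(w <- R2 br t) G w = \sum_(w <- t) \sum_(z <- R2_pure br w) G z.
Proof. by rewrite /R2 big_flatten big_map. Qed.

End Aux2.

Lemma pure_case (K : fieldType) (L : lmodType K) (br : L -> L -> L -> L)
  (W : lmodType K) (phi : Lbar L -> Lbar L -> Lbar L -> Lbar L -> W)
  (hphi : multilinear4 phi)
  (br01 : forall y z, br 0 y z = 0) (br02 : forall x z, br x 0 z = 0) (d d' : D L) :
  eval4 phi (ss (R1_pure br d d')) = eval4 phi (R2 br (ss [:: (d, d')])).
Proof.
case: d d' => a xs [b ys].
rewrite /eval4 sum_R2 !sum_ss /s_map /R1_pure /R2_pure !big_cons !big_nil !big_map /= !addr0.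
have inL0 : inL (0 : L) = 0 by [].
rewrite !scaler0 !br01 inL0 !phi0_3 ?phi0_4 // !scale1r scale0r phi0_3 // !addr0 ?add0r.
under [in RHS]eq_bigr => j _ do rewrite !big_cons big_nil /= ?scaler0 ?br01 ?inL0 ?phi0_3 ?phi0_4 // ?addr0.
under [in X in _ = _ + X]eq_bigr => j _ do rewrite big_cons big_map /= !big_cons big_nil /= ?scaler0 ?br02 ?inL0 ?phi0_3 ?phi0_4 // ?addr0.
rewrite big_flatten big_allpairs_dep /=.
under [X in _ + X = _]eq_bigr => x _ do under eq_bigr => y _ do rewrite !big_cons big_nil addr0.
under [X in _ + X + _ = _]eq_bigr => y _ do rewrite big_cons big_map.
under [X in _ = _ + X]eq_bigr => x _ do under eq_bigr => y _ do rewrite !big_cons big_nil addr0 /=.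
under [X in _ = _ + X]eq_bigr => x _ do rewrite big_split.
rewrite ![in RHS]big_split big_split /=.
rewrite [X in _ + (_ + X) + _ = _]exchange_big /=.
rewrite !addrA; congr (_ + _ + _); exact: addrAC.
Qed.


Theorem proposition5p8 (K : fieldType) (L : lmodType K) (br : L -> L -> L -> L)
  (hbr : is_3Leibniz br) (X : DD L) :
  tensor4_eq (ss (R1 br X)) (R2 br (ss X)).
Proof.
move=> W phi hphi.
case: hbr => [[b1 b2 b3] _].
have br01 y z : br 0 y z = 0.
  have := b1 1 0 0 y z; by rewrite !scale1r !addr0 => /dbl0.
have br02 x z : br x 0 z = 0.
  have := b2 1 x 0 0 z; by rewrite !scale1r !addr0 => /dbl0.
elim: X => [|[d d'] X IH]; first by [].
have -> : R1 br ((d, d') :: X) = R1_pure br d d' ++ R1 br X by [].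
have -> : ((d, d') :: X) = [:: (d, d')] ++ X by [].
rewrite (ss_cat (R1_pure br d d') (R1 br X)) (ss_cat [:: (d, d')] X) R2_cat.
rewrite (eval4_cat _ (ss (R1_pure br d d'))) (eval4_cat _ (R2 br (ss [:: (d, d')]))) IH.
by rewrite pure_case.
Qed.
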